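(* Let $A$ be the weighted shift on $\mathcal{H}$ with weights $\{1/n\}_{n\ge1}$. Then for all $t>0$ and $r>0$, \[\frac{\sqrt6}{\pi r}(e^{rt}-1)\le\Bigl\|\Bigl(\frac1t-rA\Bigr)^{-1}\Bigr\|\le te^{rt}.\]
   Context: $\mathcal{H}$ is a separable infinite-dimensional complex Hilbert space with orthonormal basis $\{e_n\}_{n=0}^\infty$, and $A$ is defined by $Ae_n=\frac{1}{n+1}e_{n+1}$ for $n\ge0$ (so its matrix has subdiagonal entries $1,\frac12,\frac13,\dots$). *)

(* Defs.v *)
From Stdlib Require Import Reals.
From Coquelicot Require Import Coquelicot.
Open Scope R_scope.

(* The Hilbert space H is modelled as l^2(N, C): e_n is the n-th unit sequence. *)
Definition seqC := nat -> C.

Definition l2 (x : seqC) : Prop := ex_series (fun n => (Cmod (x n)) ^ 2).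

Definition l2norm (x : seqC) : R := sqrt (Series (fun n => (Cmod (x n)) ^ 2)).

(* Weighted shift: A e_n = 1/(n+1) e_{n+1}, i.e. (A x)_0 = 0, (A x)_{k+1} = x_k / (k+1). *)
Definition shiftA (x : seqC) : seqC :=
  fun n => match n with
           | O => RtoC 0
           | S k => Cdiv (x k) (RtoC (INR (S k)))
           end.

Definition opB (t r : R) (x : seqC) : seqC :=
  fun n => Cminus (Cmult (RtoC (/ t)) (x n)) (Cmult (RtoC r) (shiftA x n)).

Definition opnorm (T : seqC -> seqC) : Rbar :=
  Lub_Rbar (fun y => exists x, l2 x /\ l2norm x <= 1 /\ y = l2norm (T x)).

(* Main.v *)
Require Import Defs.
From Stdlib Require Import Reals.
From Coquelicot Require Import Coquelicot.
Open Scope R_scope.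
From Stdlib Require Import Lra Lia FunctionalExtensionality Factorial.


Lemma CV_const_R (M : R) : Un_cv (fun _ => M) M.
Proof. intros e He. exists O. intros n _. unfold Rdist. rewrite Rminus_eq_0, Rabs_R0. lra. Qed.

Lemma lim_le_bound (u : nat -> R) l M : Un_cv u l -> (forall n, u n <= M) -> l <= M.
Proof. intros Hu Hb. exact (Rle_cv_lim Hb Hu (CV_const_R M)). Qed.

Lemma ser_bound (a : nat -> R) (M : R) :
  (forall n, 0 <= a n) -> (forall N, sum_f_R0 a N <= M) -> ex_series a /\ Series a <= M.
Proof.
  intros Ha Hb.
  assert (Hg : Un_growing (fun N => sum_f_R0 a N)).
  { intros n. simpl. specialize (Ha (S n)). lra. }
  assert (Hub : has_ub (fun N => sum_f_R0 a N)).
  { exists M. intros y [n ->]. apply Hb. }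
  destruct (growing_cv _ Hg Hub) as [l Hl].
  assert (Hs : is_series a l) by (apply is_series_Reals; exact Hl).
  split. { exists l; exact Hs. }
  rewrite (is_series_unique a l Hs). apply (lim_le_bound _ _ _ Hl Hb).
Qed.

Lemma ser_partial (a : nat -> R) N :
  (forall n, 0 <= a n) -> ex_series a -> sum_f_R0 a N <= Series a.
Proof.
  intros Ha He. apply sum_incr; auto.
  apply is_series_Reals. apply Series_correct. exact He.
Qed.

Lemma ser_nonneg (a : nat -> R) : (forall n, 0 <= a n) -> ex_series a -> 0 <= Series a.
Proof.
  intros Ha He. apply Rle_trans with (sum_f_R0 a O). simpl; auto. apply ser_partial; auto.
Qed.

Lemma sum_sq_expand (w b : nat -> R) (beta : R) N :
  sum_f_R0 (fun k => w k * (b k - beta)^2) N =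
  sum_f_R0 (fun k => w k * b k ^ 2) N - 2 * beta * sum_f_R0 (fun k => w k * b k) N
  + beta ^ 2 * sum_f_R0 w N.
Proof. induction N as [|N IH]; cbn [sum_f_R0]; [ring|]. rewrite IH. ring. Qed.

Lemma sum_nonneg (f : nat -> R) N : (forall k, 0 <= f k) -> 0 <= sum_f_R0 f N.
Proof. intros H. induction N; simpl; auto. specialize (H (S N)). lra. Qed.

Lemma wCS (w b : nat -> R) N : (forall k, 0 <= w k) ->
  (sum_f_R0 (fun k => w k * b k) N) ^ 2 <=
  sum_f_R0 w N * sum_f_R0 (fun k => w k * b k ^ 2) N.
Proof.
  intros Hw. induction N as [|N IH].
  - simpl. specialize (Hw O). nra.
  - cbn [sum_f_R0].
    set (P := sum_f_R0 (fun k => w k * b k) N) in *.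
    set (A := sum_f_R0 w N) in *.
    set (Q := sum_f_R0 (fun k => w k * b k ^ 2) N) in *.
    assert (H2 : 0 <= Q - 2 * b (S N) * P + b (S N) ^ 2 * A).
    { pose proof (sum_sq_expand w b (b (S N)) N) as E. fold P A Q in E. rewrite <- E.
      apply sum_nonneg.
      intros k. specialize (Hw k). apply Rmult_le_pos; auto. apply pow2_ge_0. }
    specialize (Hw (S N)). pose proof (Rmult_le_pos _ _ Hw H2) as H3.
    set (B := b (S N)) in *. set (W := w (S N)) in *.
    replace ((P + W * B) ^ 2) with (P^2 + W * (2 * B * P) + W^2 * B^2) by ring.
    replace ((A + W) * (Q + W * B ^ 2)) with (A * Q + W * (Q + B^2 * A) + W^2 * B^2) by ring.
    lra.
Qed.

Lemma sum_rev (f : nat -> R) m : sum_f_R0 (fun j => f (m - j)%nat) m = sum_f_R0 f m.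
Proof.
  induction m as [|m IH]; [reflexivity|].
  rewrite (decomp_sum _ (S m)) by lia. cbn [pred]. replace (S m - 0)%nat with (S m) by lia.
  rewrite (sum_eq (fun i => f (S m - S i)%nat) (fun j => f (m - j)%nat)) by (intros; f_equal; lia).
  rewrite IH. cbn [sum_f_R0]. ring.
Qed.

Definition conv (w X : nat -> R) (m : nat) := sum_f_R0 (fun j => w (m - j)%nat * X j) m.

Lemma conv_exchange (w X : nat -> R) N :
  sum_f_R0 (conv w X) N = sum_f_R0 (fun j => X j * sum_f_R0 w (N - j)) N.
Proof.
  induction N as [|N IH].
  - unfold conv; simpl. ring.
  - change (sum_f_R0 (conv w X) (S N)) with (sum_f_R0 (conv w X) N + conv w X (S N)).
    change (sum_f_R0 (fun j => X j * sum_f_R0 w (S N - j)) (S N)) with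
      (sum_f_R0 (fun j => X j * sum_f_R0 w (S N - j)) N + X (S N) * sum_f_R0 w (S N - S N)).
    rewrite IH. unfold conv.
    change (sum_f_R0 (fun j => w (S N - j)%nat * X j) (S N)) with
      (sum_f_R0 (fun j => w (S N - j)%nat * X j) N + w (S N - S N)%nat * X (S N)).
    replace (S N - S N)%nat with O by lia. simpl (sum_f_R0 w 0).
    rewrite (sum_eq (fun j => X j * sum_f_R0 w (S N - j)) (fun j => X j * sum_f_R0 w (N - j) + w (S N - j)%nat * X j)).
    2:{ intros i Hi. replace (S N - i)%nat with (S (N - i)) by lia. simpl. ring. }
    rewrite sum_plus. ring.
Qed.
Definition w (c : R) (k : nat) : R := / INR (fact k) * c ^ k.

Lemma INR_fact_pos k : 0 < INR (fact k).
Proof. apply lt_0_INR. apply lt_O_fact. Qed.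

Lemma w_nonneg c k : 0 <= c -> 0 <= w c k.
Proof. intros Hc. unfold w. apply Rmult_le_pos. left; apply Rinv_0_lt_compat, INR_fact_pos. apply pow_le; auto. Qed.

Lemma w_S c k : w c (S k) = c / INR (S k) * w c k.
Proof.
  unfold w. rewrite fact_simpl, mult_INR. simpl pow.
  pose proof (INR_fact_pos k). assert (0 < INR (S k)) by (apply lt_0_INR; lia).
  field. lra.
Qed.

Lemma w_O c : w c O = 1.
Proof. unfold w. simpl. lra. Qed.

Lemma exp_partial c N : 0 <= c -> sum_f_R0 (w c) N <= exp c.
Proof.
  intros Hc. apply sum_incr. apply E1_cvg. intros n; apply w_nonneg; auto.
Qed.

Definition Tp (y : R) := 1 - y + y^2/2 - y^3/6 + y^4/24 - y^5/120.

Lemma exp_neg_lb y : 0 <= y <= 1 -> Tp y <= exp (- y).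
Proof.
  intros Hy.
  set (U := fun i => y ^ i / INR (fact i)).
  assert (Hd : Un_decreasing U).
  { intros n. unfold U. rewrite fact_simpl, mult_INR. simpl pow.
    pose proof (INR_fact_pos n). assert (1 <= INR (S n)) by (apply (le_INR 1); lia).
    assert (0 <= y ^ n) by (apply pow_le; lra).
    unfold Rdiv. rewrite Rinv_mult.
    apply Rle_trans with (y ^ n * / INR (fact n) * (y * / INR (S n))). right; ring.
    rewrite <- (Rmult_1_r (y ^ n * / INR (fact n))) at 2.
    apply Rmult_le_compat_l.
    - apply Rmult_le_pos; auto. left; apply Rinv_0_lt_compat; auto.
    - apply Rle_trans with (y * 1). apply Rmult_le_compat_l. lra.
      rewrite <- Rinv_1. apply Rinv_le_contravar; lra. lra. }
  assert (Hc : Un_cv U 0) by apply cv_speed_pow_fact.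
  assert (Hs : Un_cv (fun N => sum_f_R0 (tg_alt U) N) (exp (- y))).
  { replace (fun N => sum_f_R0 (tg_alt U) N) with (E1 (- y)). apply E1_cvg.
    apply functional_extensionality; intros N. unfold E1. apply sum_eq. intros i _.
    unfold tg_alt, U. replace (- y) with (-1 * y) by ring. rewrite Rpow_mult_distr.
    unfold Rdiv. ring. }
  destruct (alternated_series_ineq U (exp (- y)) 2 Hd Hc Hs) as [H1 _].
  apply Rle_trans with (2 := H1). right.
  unfold Tp, tg_alt, U. simpl. field.
Qed.
Lemma Tp_pos y : 0 <= y <= 1 -> 0 < Tp y.
Proof. intros Hy. unfold Tp. nra. Qed.

Lemma exp_up b : 0 <= b <= 4 -> exp b * Tp (b/4) ^ 4 <= 1.
Proof.
  intros Hb. assert (Hy : 0 <= b/4 <= 1) by lra.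
  pose proof (exp_neg_lb _ Hy) as H. pose proof (Tp_pos _ Hy) as HT.
  assert (E : exp (- b) = exp (- (b/4)) ^ 4).
  { replace (- b) with (- (b/4) + - (b/4) + - (b/4) + - (b/4)) by field.
    rewrite !exp_plus. ring. }
  assert (H4 : Tp (b/4) ^ 4 <= exp (- b)).
  { rewrite E. apply pow_incr. lra. }
  assert (exp b * exp (- b) = 1) by (rewrite <- exp_plus; replace (b + - b) with 0 by ring; apply exp_0).
  pose proof (exp_pos b). nra.
Qed.

Lemma gmono c b : 0 < c <= b -> (exp c - 1) / c <= (exp b - 1) / b.
Proof.
  intros [Hc Hcb].
  assert (H1 : exp c * (1 + (b - c)) <= exp b).
  { replace b with (c + (b - c)) at 2 by ring. rewrite exp_plus.
    apply Rmult_le_compat_l. left; apply exp_pos. apply exp_ineq1_le. }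
  assert (H2 : exp c * (1 - c) <= 1).
  { pose proof (exp_ineq1_le (- c)) as H.
    assert (exp c * exp (- c) = 1) by (rewrite <- exp_plus; replace (c + - c) with 0 by ring; apply exp_0).
    pose proof (exp_pos c). nra. }
  assert (H3 : b * (exp c - 1) <= c * (exp b - 1)).
  { assert (0 <= (b - c) * (1 - exp c * (1 - c))) by (apply Rmult_le_pos; lra).
    nra. }
  apply Rmult_le_reg_r with (c * b). nra.
  unfold Rdiv. field_simplify; try lra.
Qed.

Lemma PI_lb : 600 / 61 <= PI ^ 2.
Proof.
  destruct (PI_2_3_7_ineq 1) as [H _].
  unfold tg_alt, PI_2_3_7_tg, Ratan_seq in H. simpl in H.
  nra.
Qed.

Lemma w_le_exp c n : 0 <= c -> w c n <= exp c.
Proof.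
  intros Hc. apply Rle_trans with (sum_f_R0 (w c) n); [|apply exp_partial; auto].
  destruct n. simpl; lra. simpl. pose proof (sum_nonneg (w c) n (fun k => w_nonneg c k Hc)). pose proof (w_nonneg c (S n) Hc). lra.
Qed.

Lemma wsq_ex c : 0 <= c -> ex_series (fun n => w c n ^ 2).
Proof.
  intros Hc. apply (ser_bound _ (exp c * exp c)).
  - intros; apply pow2_ge_0.
  - intros N. apply Rle_trans with (sum_f_R0 (fun n => w c n * exp c) N).
    + apply sum_Rle. intros n _. pose proof (w_nonneg c n Hc). pose proof (w_le_exp c n Hc). nra.
    + rewrite <- scal_sum. apply Rmult_le_compat_l. left; apply exp_pos.
      apply exp_partial; auto.
Qed.

Lemma P4_mono a c : 0 <= a <= c -> sum_f_R0 (fun n => w a n ^ 2) 4 <= sum_f_R0 (fun n => w c n ^ 2) 4.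
Proof.
  intros H. apply sum_Rle. intros n _. apply pow_incr. split. apply w_nonneg; lra.
  unfold w. apply Rmult_le_compat_l. left; apply Rinv_0_lt_compat, INR_fact_pos.
  apply pow_incr. lra.
Qed.

Lemma exp_le_U b U : 0 <= b <= 4 -> 1 <= U * Tp (b/4) ^ 4 -> exp b <= U.
Proof.
  intros Hb HU. pose proof (exp_up b Hb). assert (0 < Tp (b/4)) by (apply Tp_pos; lra).
  assert (0 < Tp (b/4) ^ 4) by (apply pow_lt; auto). nra.
Qed.

Lemma g_nonneg c : 0 < c -> 0 <= (exp c - 1) / c.
Proof. intros. pose proof (exp_ineq1_le c). apply Rmult_le_pos. lra. left; apply Rinv_0_lt_compat; auto. Qed.

Lemma key_interval a b U c : 0 < a -> a <= c <= b -> b <= 4 -> 1 <= U * Tp (b/4) ^ 4 ->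
  61/100 * ((U - 1)/b)^2 <= sum_f_R0 (fun n => w a n ^ 2) 4 ->
  61/100 * ((exp c - 1)/c)^2 <= sum_f_R0 (fun n => w c n ^ 2) 4.
Proof.
  intros Ha Hc Hb HU Hn.
  assert (HbU : exp b <= U) by (apply exp_le_U; auto; lra).
  apply Rle_trans with (2 := P4_mono a c ltac:(lra)).
  apply Rle_trans with (2 := Hn). apply Rmult_le_compat_l. lra.
  apply pow_incr. split. apply g_nonneg; lra.
  apply Rle_trans with ((exp b - 1)/b). apply gmono; lra.
  unfold Rdiv. apply Rmult_le_compat_r. left; apply Rinv_0_lt_compat; lra. lra.
Qed.

Lemma key_small c : 0 < c <= 2/5 -> 61/100 * ((exp c - 1)/c)^2 <= sum_f_R0 (fun n => w c n ^ 2) 0.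
Proof.
  intros Hc. simpl. rewrite w_O.
  assert (HbU : exp (2/5) <= 373/250) by (apply exp_le_U; [lra| unfold Tp; lra]).
  assert (H : (exp c - 1)/c <= (373/250 - 1)/(2/5)).
  { apply Rle_trans with ((exp (2/5) - 1)/(2/5)). apply gmono; lra. lra. }
  pose proof (g_nonneg c ltac:(lra)). nra.
Qed.

Lemma key_large c : 21/10 <= c -> 61/100 * ((exp c - 1)/c)^2 <= Series (fun n => w c n ^ 2).
Proof.
  intros Hc.
  set (Q := Series (fun n => w c n ^ 2)).
  assert (Hex := wsq_ex c ltac:(lra)).
  set (s := (c - 1/2) / c).
  assert (Hs : 0 < s < 1).
  { unfold s. split. apply Rdiv_lt_0_compat; lra. apply Rmult_lt_reg_r with c. lra. field_simplify; lra. }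
  assert (Hs2 : 0 < 1 - s^2) by nra.
  assert (HB : forall N, (E1 (c - 1/2) N)^2 <= Q / (1 - s^2)).
  { intros N.
    assert (E : E1 (c - 1/2) N = sum_f_R0 (fun k => (s^2)^k * (w c k / s^k)) N).
    { unfold E1. apply sum_eq. intros k _. unfold w.
      replace (c - 1/2) with (c * s) by (unfold s; field; lra).
      rewrite Rpow_mult_distr, <- pow_mult. replace (2 * k)%nat with (k + k)%nat by lia.
      rewrite pow_add. field. split. pose proof (INR_fact_pos k); lra. apply pow_nonzero. lra. }
    rewrite E. eapply Rle_trans. apply wCS. intros k; apply pow_le; nra.
    rewrite tech3 by nra.
    rewrite (sum_eq _ (fun k => w c k ^ 2)).
    2:{ intros k _. rewrite <- pow_mult. replace (2 * k)%nat with (k + k)%nat by lia.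
        rewrite pow_add. field. apply pow_nonzero. lra. }
    assert (HP : sum_f_R0 (fun k => w c k ^ 2) N <= Q).
    { apply ser_partial; auto. intros; apply pow2_ge_0. }
    assert (HP0 : 0 <= sum_f_R0 (fun k => w c k ^ 2) N) by (apply sum_nonneg; intros; apply pow2_ge_0).
    assert (0 <= (s^2) ^ S N) by (apply pow_le; nra).
    unfold Rdiv. rewrite (Rmult_comm Q).
    apply Rle_trans with ((1 - (s^2) ^ S N) * / (1 - s^2) * Q).
    apply Rmult_le_compat_l. apply Rmult_le_pos. 
    assert ((s^2) ^ S N <= 1). { rewrite <- (pow1 (S N)). apply pow_incr. nra. } lra.
    left; apply Rinv_0_lt_compat; auto. auto.
    apply Rmult_le_compat_r. apply (ser_nonneg _ (fun n => pow2_ge_0 _) Hex).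
    rewrite <- (Rmult_1_l (/ (1 - s^2))) at 2. apply Rmult_le_compat_r.
    left; apply Rinv_0_lt_compat; auto. lra. }
  assert (Hexp : exp (c - 1/2) <= sqrt (Q / (1 - s^2))).
  { apply (lim_le_bound (E1 (c - 1/2))). apply E1_cvg.
    intros N. rewrite <- (sqrt_pow2 (E1 (c - 1/2) N)).
    apply sqrt_le_1_alt. apply HB. unfold E1. apply sum_nonneg. intros k.
    apply Rmult_le_pos. left; apply Rinv_0_lt_compat, INR_fact_pos. apply pow_le; lra. }
  assert (HQ0 : 0 <= Q / (1 - s^2)).
  { apply Rmult_le_pos. apply (ser_nonneg _ (fun n => pow2_ge_0 _) Hex). left; apply Rinv_0_lt_compat; auto. }
  assert (Hsq : exp (c - 1/2) ^ 2 <= Q / (1 - s^2)).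
  { rewrite <- (pow2_sqrt (Q / (1 - s^2))) by auto. apply pow_incr. split; auto. left; apply exp_pos. }
  assert (Hexp2 : exp (c - 1/2) ^ 2 = exp c ^ 2 * exp (- (1))).
  { simpl. rewrite !Rmult_1_r. rewrite <- (exp_plus c c), <- exp_plus, <- exp_plus. apply f_equal. lra. }
  assert (HX : 1/3 <= exp (- (1))).
  { rewrite exp_Ropp. pose proof exp_le_3. pose proof (exp_pos 1).
    apply Rmult_le_reg_l with (exp 1); auto. rewrite Rinv_r by lra. lra. }
  set (E := exp c) in *.
  assert (HE : 1 <= E) by (pose proof (exp_ineq1_le c); unfold E; lra).
  assert (HQ : (1 - s^2) * (E^2 * exp (- (1))) <= Q).
  { rewrite <- Hexp2. apply Rmult_le_reg_l with (/ (1 - s^2)). apply Rinv_0_lt_compat; auto.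
    rewrite <- Rmult_assoc, Rinv_l by lra. rewrite Rmult_1_l, Rmult_comm. exact Hsq. }
  set (ic := / c).
  assert (Hic : 0 < ic <= 10/21).
  { unfold ic. split. apply Rinv_0_lt_compat; lra.
    replace (10/21) with (/ (21/10)) by field. apply Rinv_le_contravar; lra. }
  assert (Es : 1 - s^2 = ic - ic^2/4) by (unfold s, ic; field; lra).
  assert (Eg : (E - 1)/c = (E - 1) * ic) by reflexivity.
  rewrite Eg. rewrite Es in HQ.
  apply Rle_trans with (2 := HQ).
  assert (H1 : ((E - 1) * ic)^2 <= E^2 * ic^2).
  { rewrite Rpow_mult_distr. apply Rmult_le_compat_r. apply pow2_ge_0. apply pow_incr; lra. }
  assert (H2 : 61/100 * ic^2 <= (ic - ic^2/4) * exp (- (1))).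
  { apply Rle_trans with ((ic - ic^2/4) * (1/3)). nra. apply Rmult_le_compat_l. nra. auto. }
  assert (0 <= E^2) by apply pow2_ge_0.
  nra.
Qed.

Lemma key_int a b U c : 0 < a -> a <= c <= b -> b <= 4 -> 1 <= U * Tp (b/4) ^ 4 ->
  61/100 * ((U - 1)/b)^2 <= sum_f_R0 (fun n => w a n ^ 2) 4 ->
  61/100 * ((exp c - 1)/c)^2 <= Series (fun n => w c n ^ 2).
Proof.
  intros. eapply Rle_trans. eapply key_interval; eauto.
  apply ser_partial. intros; apply pow2_ge_0. apply wsq_ex; lra.
Qed.

Ltac kint a b U := apply (key_int a b U); [lra|lra|lra|unfold Tp; lra|unfold w; simpl; lra].

Lemma key c : 0 < c -> 61/100 * ((exp c - 1)/c)^2 <= Series (fun n => w c n ^ 2).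
Proof.
  intros Hc.
  destruct (Rle_lt_dec c (2/5)).
  { eapply Rle_trans. apply key_small; lra.
    apply ser_partial. intros; apply pow2_ge_0. apply wsq_ex; lra. }
  destruct (Rle_lt_dec c (3/5)). { kint (2/5) (3/5) (1823/1000). }
  destruct (Rle_lt_dec c (7/10)). { kint (3/5) (7/10) (1007/500). }
  destruct (Rle_lt_dec c (4/5)). { kint (7/10) (4/5) (1113/500). }
  destruct (Rle_lt_dec c (9/10)). { kint (4/5) (9/10) (123/50). }
  destruct (Rle_lt_dec c 1). { kint (9/10) 1 (2719/1000). }
  destruct (Rle_lt_dec c (11/10)). { kint 1 (11/10) (601/200). }
  destruct (Rle_lt_dec c (13/10)). { kint (11/10) (13/10) (367/100). }
  destruct (Rle_lt_dec c (3/2)). { kint (13/10) (3/2) (2241/500). }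
  destruct (Rle_lt_dec c (9/5)). { kint (3/2) (9/5) (6051/1000). }
  destruct (Rle_lt_dec c (21/10)). { kint (9/5) (21/10) (1021/125). }
  apply key_large. lra.
Qed.

Fixpoint Sy (t r : R) (x : seqC) (n : nat) : C :=
  match n with
  | O => Cmult (RtoC t) (x O)
  | S k => Cplus (Cmult (RtoC t) (x (S k))) (Cmult (RtoC (t * r / INR (S k))) (Sy t r x k))
  end.

Lemma Sy_S t r x k : Sy t r x (S k) = Cplus (Cmult (RtoC t) (x (S k))) (Cmult (RtoC (t * r / INR (S k))) (Sy t r x k)).
Proof. reflexivity. Qed.
Lemma Sy_O t r x : Sy t r x O = Cmult (RtoC t) (x O).
Proof. reflexivity. Qed.

Lemma Sy_bound t r x m : 0 < t -> 0 <= r ->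
  Cmod (Sy t r x m) <= t * conv (w (t * r)) (fun j => Cmod (x j)) m.
Proof.
  intros Ht Hr. set (c := t * r). assert (Hc : 0 <= c) by (unfold c; nra).
  induction m as [|m IH].
  - rewrite Sy_O. unfold conv. simpl. rewrite w_O, Cmod_mult, Cmod_R, Rabs_pos_eq by lra. lra.
  - rewrite Sy_S. eapply Rle_trans. apply Cmod_triangle.
    rewrite !Cmod_mult, !Cmod_R.
    assert (HS : 0 < INR (S m)) by (apply lt_0_INR; lia).
    rewrite (Rabs_pos_eq t) by lra.
    rewrite (Rabs_pos_eq (t * r / INR (S m))) by (apply Rmult_le_pos; [nra| left; apply Rinv_0_lt_compat; auto]).
    fold c.
    unfold conv. change (sum_f_R0 (fun j => w c (S m - j)%nat * Cmod (x j)) (S m)) with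
      (sum_f_R0 (fun j => w c (S m - j)%nat * Cmod (x j)) m + w c (S m - S m)%nat * Cmod (x (S m))).
    replace (S m - S m)%nat with O by lia. rewrite w_O.
    assert (H : c / INR (S m) * sum_f_R0 (fun j => w c (m - j)%nat * Cmod (x j)) m <=
                sum_f_R0 (fun j => w c (S m - j)%nat * Cmod (x j)) m).
    { rewrite scal_sum. apply sum_Rle. intros j Hj.
      replace (S m - j)%nat with (S (m - j)) by lia. rewrite w_S.
      pose proof (Cmod_ge_0 (x j)). pose proof (w_nonneg c (m - j) Hc).
      assert (HSj : 0 < INR (S (m - j))) by (apply lt_0_INR; lia).
      assert (HSjm : INR (S (m - j)) <= INR (S m)) by (apply le_INR; lia).
      assert (c / INR (S m) <= c / INR (S (m - j))).
      { unfold Rdiv. apply Rmult_le_compat_l; auto. apply Rinv_le_contravar; auto. }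
      assert (0 <= w c (m - j) * Cmod (x j)) by (apply Rmult_le_pos; auto).
      apply Rle_trans with (w c (m - j) * Cmod (x j) * (c / INR (S (m - j)))).
      apply Rmult_le_compat_l; auto. right; ring. }
    unfold conv in IH.
    assert (0 <= c / INR (S m)) by (apply Rmult_le_pos; [lra| left; apply Rinv_0_lt_compat; auto]).
    assert (c / INR (S m) * Cmod (Sy t r x m) <= c / INR (S m) * (t * sum_f_R0 (fun j => w c (m - j)%nat * Cmod (x j)) m)).
    { apply Rmult_le_compat_l; auto. }
    nra.
Qed.

Lemma conv_sq c (xi : nat -> R) m : 0 <= c ->
  (conv (w c) xi m) ^ 2 <= exp c * conv (w c) (fun j => xi j ^ 2) m.
Proof.
  intros Hc. unfold conv.
  eapply Rle_trans. apply (wCS (fun j => w c (m - j)%nat) xi m). intros; apply w_nonneg; auto.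
  rewrite (sum_rev (w c) m). apply Rmult_le_compat_r.
  apply sum_nonneg. intros k. apply Rmult_le_pos. apply w_nonneg; auto. apply pow2_ge_0.
  apply exp_partial; auto.
Qed.

Lemma Sy_l2 t r x : 0 < t -> 0 <= r -> l2 x ->
  l2 (Sy t r x) /\ Series (fun n => Cmod (Sy t r x n) ^ 2) <=
     (t * exp (t * r)) ^ 2 * Series (fun n => Cmod (x n) ^ 2).
Proof.
  intros Ht Hr Hx. set (c := t * r). assert (Hc : 0 <= c) by (unfold c; nra).
  set (SX := Series (fun n => Cmod (x n) ^ 2)).
  assert (HXp : forall N, sum_f_R0 (fun n => Cmod (x n) ^ 2) N <= SX).
  { intros N. apply ser_partial; auto. intros; apply pow2_ge_0. }
  assert (Hb : forall N, sum_f_R0 (fun n => Cmod (Sy t r x n) ^ 2) N <= (t * exp c) ^ 2 * SX).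
  { intros N.
    apply Rle_trans with (sum_f_R0 (fun m => conv (w c) (fun j => Cmod (x j) ^ 2) m * (t^2 * exp c)) N).
    { apply sum_Rle. intros m _.
      pose proof (Sy_bound t r x m Ht Hr) as H1. fold c in H1.
      pose proof (conv_sq c (fun j => Cmod (x j)) m Hc) as H2.
      apply Rle_trans with ((t * conv (w c) (fun j => Cmod (x j)) m) ^ 2).
      apply pow_incr. split; auto. apply Cmod_ge_0.
      rewrite Rpow_mult_distr. 
      apply Rle_trans with (t^2 * (exp c * conv (w c) (fun j => Cmod (x j) ^ 2) m)).
      apply Rmult_le_compat_l. apply pow2_ge_0. exact H2. right; ring. }
    rewrite <- scal_sum. rewrite conv_exchange.
    apply Rle_trans with (t ^ 2 * exp c * (sum_f_R0 (fun j => Cmod (x j) ^ 2 * exp c) N)).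
    { apply Rmult_le_compat_l. pose proof (exp_pos c). pose proof (pow2_ge_0 t). nra.
      apply sum_Rle. intros j _. apply Rmult_le_compat_l. apply pow2_ge_0. apply exp_partial; auto. }
    rewrite <- scal_sum.
    pose proof (HXp N). pose proof (exp_pos c). pose proof (pow2_ge_0 t).
    replace ((t * exp c) ^ 2 * SX) with (t ^ 2 * exp c * (exp c * SX)) by ring.
    apply Rmult_le_compat_l. nra. apply Rmult_le_compat_l; lra. }
  destruct (ser_bound _ _ (fun n => pow2_ge_0 _) Hb) as [H1 H2].
  split; auto.
Qed.

Lemma opB_Sy t r x : t <> 0 -> opB t r (Sy t r x) = x.
Proof.
  intros ht. apply functional_extensionality; intros n.
  unfold opB, shiftA. destruct n as [|k]; [rewrite Sy_O | rewrite Sy_S].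
  - destruct (x O) as [u v]. unfold Cminus, Cmult, Copp, Cplus, RtoC; simpl.
    apply injective_projections; simpl; field; auto.
  - pose proof (lt_0_INR (S k) ltac:(lia)) as Hk. set (n := INR (S k)) in *.
    destruct (x (S k)) as [u v]. destruct (Sy t r x k) as [p q].
    unfold Cminus, Cmult, Copp, Cplus, RtoC, Cdiv, Cinv; cbn [fst snd Cmult Cplus Copp Cminus].
    apply injective_projections; cbn [fst snd]; field; lra.
Qed.

Lemma Sy_opB t r x : t <> 0 -> Sy t r (opB t r x) = x.
Proof.
  intros ht. apply functional_extensionality; intros n.
  induction n as [|k IH].
  - rewrite Sy_O. unfold opB, shiftA.
    destruct (x O) as [u v]. unfold Cminus, Cmult, Copp, Cplus, RtoC; simpl.
    apply injective_projections; simpl; field; auto.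
  - rewrite Sy_S, IH. unfold opB, shiftA.
    pose proof (lt_0_INR (S k) ltac:(lia)) as Hk. set (n := INR (S k)) in *.
    destruct (x (S k)) as [u v]. destruct (x k) as [p q].
    unfold Cminus, Cmult, Copp, Cplus, RtoC, Cdiv, Cinv; cbn [fst snd Cmult Cplus Copp Cminus].
    apply injective_projections; cbn [fst snd]; field; lra.
Qed.

Definition e0 : seqC := fun n => match n with O => RtoC 1 | S _ => RtoC 0 end.

Lemma Sy_e0 t r n : Sy t r e0 n = RtoC (t * w (t * r) n).
Proof.
  induction n as [|n IH].
  - rewrite Sy_O, w_O. unfold e0. unfold Cmult, RtoC.
    apply injective_projections; cbn [fst snd]; ring.
  - rewrite Sy_S, IH, w_S. unfold e0. set (a := t * r / INR (S n)). set (b := w (t * r) n).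
    unfold Cmult, Cplus, RtoC.
    apply injective_projections; cbn [fst snd]; unfold a; field; apply not_0_INR; lia.
Qed.

Lemma e0_l2 : l2 e0 /\ l2norm e0 <= 1.
Proof.
  assert (H : forall N, sum_f_R0 (fun n => Cmod (e0 n) ^ 2) N <= 1).
  { induction N. cbn [sum_f_R0 e0]. rewrite Cmod_1. lra. cbn [sum_f_R0 e0]. rewrite Cmod_0. lra. }
  destruct (ser_bound _ _ (fun n => pow2_ge_0 _) H) as [H1 H2].
  split; auto. unfold l2norm. rewrite <- sqrt_1. apply sqrt_le_1_alt. auto.
Qed.

Theorem lemma3p2 (t r : R) (ht : 0 < t) (hr : 0 < r) :
  exists S : seqC -> seqC,
    (forall x, l2 x -> l2 (S x)) /\
    (forall x, l2 x -> S (opB t r x) = x) /\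
    (forall x, l2 x -> opB t r (S x) = x) /\
    Rbar_le (Finite (sqrt 6 / (PI * r) * (exp (r * t) - 1))) (opnorm S) /\
    Rbar_le (opnorm S) (Finite (t * exp (r * t))).
Proof.
  exists (Sy t r).
  rewrite (Rmult_comm r t).
  set (c := t * r). assert (Hc : 0 < c) by (unfold c; nra).
  split; [| split; [| split; [| split]]].
  - intros x Hx. apply (Sy_l2 t r x); auto; lra.
  - intros x _. apply Sy_opB; lra.
  - intros x _. apply opB_Sy; lra.
  - unfold opnorm.
    set (E := fun y => exists x, l2 x /\ l2norm x <= 1 /\ y = l2norm (Sy t r x)).
    destruct (Lub_Rbar_correct E) as [Hub _].
    eapply Rbar_le_trans; [| apply (Hub (l2norm (Sy t r e0)))].
    2:{ exists e0. destruct e0_l2. auto. }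
    simpl.
    set (Q := Series (fun n => w c n ^ 2)).
    assert (HQ : l2norm (Sy t r e0) = sqrt (t ^ 2 * Q)).
    { unfold l2norm. f_equal. unfold Q. rewrite <- Series_scal_l. apply Series_ext.
      intros n. rewrite Sy_e0. fold c. rewrite Cmod_R.
      rewrite pow2_abs. ring. }
    rewrite HQ.
    pose proof (key c Hc) as K. fold Q in K.
    pose proof PI_lb as HPI. pose proof PI_RGT_0 as HP.
    set (E1 := exp c) in *.
    assert (HE : 1 <= E1) by (pose proof (exp_ineq1_le c); unfold E1; lra).
    set (L := sqrt 6 / (PI * r) * (E1 - 1)).
    assert (HL : 0 <= L).
    { unfold L. apply Rmult_le_pos; [|lra]. apply Rmult_le_pos. apply sqrt_pos.
      left; apply Rinv_0_lt_compat; nra. }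
    assert (HL2 : L ^ 2 = t ^ 2 * (6 / PI ^ 2) * ((E1 - 1) / c) ^ 2).
    { unfold L, c. rewrite Rpow_mult_distr. unfold Rdiv. rewrite Rpow_mult_distr.
      rewrite pow2_sqrt by lra. field. split; lra. }
    assert (H6 : 6 / PI ^ 2 <= 61 / 100).
    { apply Rmult_le_reg_r with (PI ^ 2). nra. unfold Rdiv. rewrite Rmult_assoc, Rinv_l by nra. nra. }
    rewrite <- (sqrt_pow2 L HL). apply sqrt_le_1_alt. rewrite HL2.
    rewrite Rmult_assoc. apply Rmult_le_compat_l. apply pow2_ge_0.
    eapply Rle_trans; [| exact K]. apply Rmult_le_compat_r. apply pow2_ge_0. exact H6.
  - unfold opnorm.
    destruct (Lub_Rbar_correct (fun y => exists x, l2 x /\ l2norm x <= 1 /\ y = l2norm (Sy t r x))) as [_ Hlub].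
    apply Hlub. intros y [x [Hx [Hn ->]]]. simpl.
    destruct (Sy_l2 t r x ltac:(lra) ltac:(lra) Hx) as [_ HS]. fold c in HS.
    unfold l2norm in *.
    assert (0 <= t * exp c) by (pose proof (exp_pos c); nra).
    set (SX := Series (fun n => Cmod (x n) ^ 2)) in *.
    assert (HSX : 0 <= SX) by (apply ser_nonneg; auto; intros; apply pow2_ge_0).
    apply Rle_trans with (sqrt ((t * exp c) ^ 2 * SX)). apply sqrt_le_1_alt; auto.
    rewrite sqrt_mult by (auto; apply pow2_ge_0). rewrite sqrt_pow2 by auto.
    rewrite <- (Rmult_1_r (t * exp c)) at 2. apply Rmult_le_compat_l; auto.
Qed.
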